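(* Let $a\ge b\ge1$ be integers and define integers $c_j,d_j$ ($j\in\mathbb Z_+$) by $c_0=d_0=0$, $c_1=d_1=1$, $c_{k+2}+c_k=a d_{k+1}$, $d_{k+2}+d_k=b c_{k+1}$. Then for all $j\in\mathbb Z_+$ we have $c_{2j+1}=d_{2j+1}$ and $c_{2j}=\frac{a}{b}d_{2j}$.
   Context: $\mathbb Z_+=\{0,1,2,\dots\}$. *)

(* Defs.v *)
From mathcomp Require Import all_boot all_order all_algebra.

(* Main.v *)
Require Import Defs.
From mathcomp Require Import all_boot all_order all_algebra.
From mathcomp Require Import ring lra.
Import Order.TTheory GRing.Theory Num.Theory.
Local Open Scope ring_scope.

Theorem lemma2p5 (a b : int) :
  1 <= b -> b <= a ->
  forall c d : nat -> int,
    c 0%N = 0 -> d 0%N = 0 -> c 1%N = 1 -> d 1%N = 1 ->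
    (forall k : nat, c k.+2 + c k = a * d k.+1) ->
    (forall k : nat, d k.+2 + d k = b * c k.+1) ->
    forall j : nat,
      c (2 * j).+1 = d (2 * j).+1 /\
      (c (2 * j)%N)%:~R = (a%:~R / b%:~R : rat) * (d (2 * j)%N)%:~R.
Proof.
move=> hb hab c d c0 d0 c1 d1 hc hd.
have H : forall j, c (2 * j).+1 = d (2 * j).+1 /\ b * c (2 * j)%N = a * d (2 * j)%N.
  elim=> [|j [IH1 IH2]]; first by rewrite muln0 c1 d1 c0 d0 !mulr0.
  have -> : (2 * j.+1 = (2 * j).+2)%N by rewrite mulnS.
  have ec2 : c (2 * j).+2 = a * d (2 * j).+1 - c (2 * j)%N.
    by rewrite -hc addrK.
  have ed2 : d (2 * j).+2 = b * c (2 * j).+1 - d (2 * j)%N.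
    by rewrite -hd addrK.
  have E2 : b * c (2 * j).+2 = a * d (2 * j).+2.
    rewrite ec2 ed2 -IH1 mulrBr mulrBr IH2; ring.
  split=> //.
  have ec3 : c (2 * j).+3 = a * d (2 * j).+2 - c (2 * j).+1.
    by rewrite -hc addrK.
  have ed3 : d (2 * j).+3 = b * c (2 * j).+2 - d (2 * j).+1.
    by rewrite -hd addrK.
  by rewrite ec3 ed3 E2 IH1.
move=> j; have [H1 H2] := H j; split=> //.
have bn0 : (b%:~R : rat) != 0.
  rewrite intr_eq0; apply/negP=> /eqP b0; move: hb; rewrite b0 //.
apply: (mulfI bn0).
rewrite mulrA mulrCA divff // mulr1 -!intrM H2 //.
Qed.
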